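(* $\mathcal D_{(11,0,1)}$ is a variety biregular to $\mathbb P^2\times\mathbb P^1$; in particular it is irreducible and smooth. The same holds for $\mathcal D_{(1,0,11)}$.
   Context: $\mathbb P^7$ is the projective space of nonzero polynomials $\sum_{0\le i,j\le2,(i,j)\ne(2,2)}a_{ij}z^iw^j$ up to scalars. $\mathcal D_{(11,0,1)}\subset\mathbb P^7$ is the set of classes of nonzero cubics $(a_1z+c_1)(a_2z+c_2)(b_3w+c_3)$, and $\mathcal D_{(1,0,11)}\subset\mathbb P^7$ the set of classes of nonzero cubics $(a_1z+c_1)(b_2w+c_2)(b_3w+c_3)$ (complex parameters). *)

(* Defs.v *)
From HB Require Import structures.
From mathcomp Require Import all_boot all_algebra.
From mathcomp Require Import complex reals.
From mathcomp Require Import mpoly.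
Set Implicit Arguments. Unset Strict Implicit. Unset Printing Implicit Defensive.
Import GRing.Theory.
Local Open Scope ring_scope.

Section ProjectiveGeometry.
Variable F : fieldType.

(* Homogeneous coordinates: a point of P^n is represented by a vector
   v : 'I_n.+1 -> F which is nonzero; two representatives define the same
   point iff they are proportional. *)
Definition nonzero_vec (n : nat) (v : 'I_n -> F) : Prop := exists i, v i != 0.

Definition proj_eq (n : nat) (v w : 'I_n -> F) : Prop :=
  exists2 l : F, l != 0 & forall i, w i = l * v i.

Definition homog_poly (n : nat) (d : nat) (p : {mpoly F[n]}) : bool :=
  p \is d.-homog.

Definition proj_closed (n : nat) (X : ('I_n.+1 -> F) -> Prop) : Prop :=
  exists s : seq {mpoly F[n.+1]},
    (forall p, p \in s -> exists d, homog_poly d p) /\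
    forall v, nonzero_vec v -> (X v <-> forall p, p \in s -> p.@[v] = 0).

Definition regular_from_proj (n m : nat) (X : ('I_n.+1 -> F) -> Prop)
    (f : ('I_n.+1 -> F) -> ('I_m.+1 -> F)) : Prop :=
  forall x, nonzero_vec x -> X x ->
    exists d : nat, exists g : 'I_m.+1 -> {mpoly F[n.+1]},
      (forall k, homog_poly d (g k)) /\
      nonzero_vec (fun k => (g k).@[x]) /\
      forall y, nonzero_vec y -> X y -> nonzero_vec (fun k => (g k).@[y]) ->
        proj_eq (f y) (fun k => (g k).@[y]).

(* P^2 x P^1: pairs of representatives; bihomogeneous polynomials are
   polynomials in 5 variables, the first 3 being coordinates on P^2 and the
   last 2 coordinates on P^1. *)
Definition concat32 (x : 'I_3 -> F) (y : 'I_2 -> F) : 'I_5 -> F :=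
  fun i => match @split 3 2 i with inl j => x j | inr j => y j end.

Definition bihomog_poly (a b : nat) (p : {mpoly F[5]}) : Prop :=
  forall m : 'X_{1..5}, m \in msupp p ->
    (\sum_(i < 5 | (i < 3)%N) m i)%N = a /\ (\sum_(i < 5 | (3 <= i)%N) m i)%N = b.

Definition regular_from_P2P1 (m : nat)
    (f : ('I_3 -> F) -> ('I_2 -> F) -> ('I_m.+1 -> F)) : Prop :=
  forall x y, nonzero_vec x -> nonzero_vec y ->
    exists a b : nat, exists g : 'I_m.+1 -> {mpoly F[5]},
      (forall k, bihomog_poly a b (g k)) /\
      nonzero_vec (fun k => (g k).@[concat32 x y]) /\
      forall x' y', nonzero_vec x' -> nonzero_vec y' ->
        nonzero_vec (fun k => (g k).@[concat32 x' y']) ->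
        proj_eq (f x' y') (fun k => (g k).@[concat32 x' y']).

Definition biregular_to_P2P1 (n : nat) (X : ('I_n.+1 -> F) -> Prop) : Prop :=
  proj_closed X /\
  exists (phi : ('I_3 -> F) -> ('I_2 -> F) -> ('I_n.+1 -> F))
         (psi1 : ('I_n.+1 -> F) -> ('I_3 -> F))
         (psi2 : ('I_n.+1 -> F) -> ('I_2 -> F)),
    [/\ regular_from_P2P1 phi,
        regular_from_proj X psi1,
        regular_from_proj X psi2,
        (forall x y, nonzero_vec x -> nonzero_vec y ->
           X (phi x y) /\ proj_eq (psi1 (phi x y)) x /\ proj_eq (psi2 (phi x y)) y)
      & (forall v, nonzero_vec v -> X v -> proj_eq (phi (psi1 v) (psi2 v)) v)].

(* P^7: classes of nonzero polynomials sum_{0<=i,j<=2, (i,j)<>(2,2)} a_ij z^i w^j.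
   Coordinate k : 'I_8 is the coefficient a_ij of z^i w^j with i = k %/ 3,
   j = k %% 3, i.e. the order (0,0),(0,1),(0,2),(1,0),(1,1),(1,2),(2,0),(2,1). *)
Definition zw_monom (k : 'I_8) : 'X_{1..2} :=
  [multinom (if (i == 0 :> nat) then (k %/ 3)%N else (k %% 3)%N) | i < 2].

Definition coef_vec (p : {mpoly F[2]}) : 'I_8 -> F := fun k => p@_(zw_monom k).

Definition Z : {mpoly F[2]} := 'X_(ord0 : 'I_2).
Definition W : {mpoly F[2]} := 'X_(ord_max : 'I_2).

Definition D_11_0_1 (v : 'I_8 -> F) : Prop :=
  exists a1 c1 a2 c2 b3 c3 : F,
    let p := (a1 *: Z + c1%:MP) * (a2 *: Z + c2%:MP) * (b3 *: W + c3%:MP) in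
    p != 0 /\ proj_eq (coef_vec p) v.

Definition D_1_0_11 (v : 'I_8 -> F) : Prop :=
  exists a1 c1 b2 c2 b3 c3 : F,
    let p := (a1 *: Z + c1%:MP) * (b2 *: W + c2%:MP) * (b3 *: W + c3%:MP) in
    p != 0 /\ proj_eq (coef_vec p) v.

End ProjectiveGeometry.

(* Main.v *)
Require Import Defs.
From HB Require Import structures.
From mathcomp Require Import all_boot all_algebra.
From mathcomp Require Import complex reals.
From mathcomp Require Import mpoly.
From mathcomp Require Import ring zify.
Set Implicit Arguments. Unset Strict Implicit. Unset Printing Implicit Defensive.
Import GRing.Theory Num.Theory.
Local Open Scope ring_scope.

Lemma ord3P (i : 'I_3) : i = inord 0 \/ i = inord 1 \/ i = inord 2.
Proof.
case: i => [[|[|[|m]]] Hm]; [left|right;left|right;right|by []];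
  apply: val_inj; rewrite /= inordK //.
Qed.

Lemma ord2P (i : 'I_2) : i = inord 0 \/ i = inord 1.
Proof.
case: i => [[|[|m]] Hm]; [left|right|by []]; apply: val_inj; rewrite /= inordK //.
Qed.

Section Gen.
Variable F : fieldType.

Lemma divE (x y u w : F) : x != 0 -> x * y = w * u -> y = u * (w / x).
Proof. move=> Hx H; apply: (mulfI Hx); rewrite H; by field. Qed.

Ltac solm m1 m2 m3 :=
  first [ by rewrite mulr1 | by rewrite mul1r | by field
        | exact m1 | exact (esym m1) | by rewrite mulrC m1 mulrC | by rewrite mulrC -m1 mulrC
        | exact m2 | exact (esym m2) | by rewrite mulrC m2 mulrC | by rewrite mulrC -m2 mulrC
        | exact m3 | exact (esym m3) | by rewrite mulrC m3 mulrC | by rewrite mulrC -m3 mulrC ].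

Lemma rank1_6 (a0 a1 b0 b1 c0 c1 : F) :
  a0*b1 = a1*b0 -> a0*c1 = a1*c0 -> b0*c1 = b1*c0 ->
  ~~ [&& (a0 == 0), (a1 == 0), (b0 == 0), (b1 == 0), (c0 == 0) & (c1 == 0)] ->
  exists q0 q1 q2 l0 l1,
    [/\ a0 = q0*l0, a1 = q0*l1, b0 = q1*l0 & b1 = q1*l1] /\ c0 = q2*l0 /\ c1 = q2*l1.
Proof.
move=> m1 m2 m3 Hnz.
have [Za0|H] := eqVneq a0 0; last first.
  exists a0, b0, c0, 1, (a1/a0); (split; [split|split]); try by rewrite mulr1.
  - by field.
  - by apply: divE H _; solm m1 m2 m3.
  - by apply: divE H _; solm m1 m2 m3.
have [Za1|H] := eqVneq a1 0; last first.
  exists a1, b1, c1, (a0/a1), 1; (split; [split|split]); try by rewrite mulr1.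
  - by field.
  - by apply: divE H _; solm m1 m2 m3.
  - by apply: divE H _; solm m1 m2 m3.
have [Zb0|H] := eqVneq b0 0; last first.
  exists a0, b0, c0, 1, (b1/b0); (split; [split|split]); try by rewrite mulr1.
  - by apply: divE H _; solm m1 m2 m3.
  - by field.
  - by apply: divE H _; solm m1 m2 m3.
have [Zb1|H] := eqVneq b1 0; last first.
  exists a1, b1, c1, (b0/b1), 1; (split; [split|split]); try by rewrite mulr1.
  - by apply: divE H _; solm m1 m2 m3.
  - by field.
  - by apply: divE H _; solm m1 m2 m3.
have [Zc0|H] := eqVneq c0 0; last first.
  exists a0, b0, c0, 1, (c1/c0); (split; [split|split]); try by rewrite mulr1.
  - by apply: divE H _; solm m1 m2 m3.
  - by apply: divE H _; solm m1 m2 m3.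
  - by field.
have [Zc1|H] := eqVneq c1 0; last first.
  exists a1, b1, c1, (c0/c1), 1; (split; [split|split]); try by rewrite mulr1.
  - by apply: divE H _; solm m1 m2 m3.
  - by apply: divE H _; solm m1 m2 m3.
  - by field.
by rewrite Za0 Za1 Zb0 Zb1 Zc0 Zc1 eqxx in Hnz.
Qed.

Lemma proj_eq_scale n (x : 'I_n -> F) nu :
  nu != 0 -> proj_eq (fun i => nu * x i) x.
Proof. move=> H; exists nu^-1; first by rewrite invr_neq0. by move=> i; rewrite mulrA mulVf ?mul1r. Qed.

Definition pickv N m (c : 'I_N.+1 -> 'I_m -> F) : 'I_m -> F :=
  if [pick t | [exists i, c t i != 0]] is Some t then c t else c ord0.

Lemma pickvP N m (c : 'I_N.+1 -> 'I_m -> F) (w : 'I_N.+1 -> F) (u : 'I_m -> F) :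
  (forall t i, c t i = w t * u i) -> (exists t0, nonzero_vec (c t0)) ->
  exists2 nu, nu != 0 & forall i, pickv c i = nu * u i.
Proof.
move=> Hc [t0 [i0 Hi0]]; rewrite /pickv; case: pickP => [t /existsP[i Hi] | H].
  exists (w t); last by move=> j; rewrite Hc.
  by apply: contraNneq Hi => Hw; rewrite Hc Hw mul0r.
have : [exists i, c t0 i != 0] by apply/existsP; exists i0.
by move: (H t0) => /= ->.
Qed.


Lemma sumU n (a : 'I_n) (P : pred 'I_n) : (\sum_(i < n | P i) U_(a)%MM i)%N = P a.
Proof.
rewrite big_mkcond (bigD1 a) //= mnm1E eqxx big1 ?addn0; first by case: (P a).
by move=> i /negbTE ne; rewrite mnm1E eq_sym ne; case: (P i).
Qed.

Lemma concat_l (x : 'I_3 -> F) (y : 'I_2 -> F) (i : 'I_3) : concat32 x y (lshift 2 i) = x i.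
Proof.
rewrite /concat32; case: splitP => [j /= Hj | k /= Hk].
  by congr x; apply: val_inj.
by have := ltn_ord i; rewrite Hk; lia.
Qed.

Lemma concat_r (x : 'I_3 -> F) (y : 'I_2 -> F) (j : 'I_2) : concat32 x y (rshift 3 j) = y j.
Proof.
rewrite /concat32; case: splitP => [i /= Hi | k /= Hk].
  by have := ltn_ord i; rewrite -Hi; lia.
by congr y; apply: val_inj => /=; lia.
Qed.

Section Segre.
Variables (e : 'I_3 -> 'I_2 -> 'I_8) (zp : pred 'I_8) (ri : 'I_8 -> 'I_3) (rj : 'I_8 -> 'I_2).
Hypothesis Hz : forall i j, zp (e i j) = false.
Hypothesis Hri : forall i j, ri (e i j) = i.
Hypothesis Hrj : forall i j, rj (e i j) = j.
Hypothesis He : forall k, ~~ zp k -> e (ri k) (rj k) = k.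

Definition segre (q : 'I_3 -> F) (l : 'I_2 -> F) : 'I_8 -> F :=
  fun k => if zp k then 0 else q (ri k) * l (rj k).

Lemma segreE q l i j : segre q l (e i j) = q i * l j.
Proof. by rewrite /segre Hz Hri Hrj. Qed.

Lemma segre_nz q l : nonzero_vec q -> nonzero_vec l -> nonzero_vec (segre q l).
Proof. move=> [i Hi] [j Hj]; exists (e i j); by rewrite segreE mulf_neq0. Qed.

Lemma nz_seg v q l : nonzero_vec v -> (forall k, v k = segre q l k) ->
  exists i j, v (e i j) != 0.
Proof.
move=> [k Hk] Hv; exists (ri k), (rj k).
have nz : ~~ zp k by apply/negP => Zk; move: Hk; rewrite Hv /segre Zk eqxx.
by rewrite He.
Qed.

Variable X : ('I_8 -> F) -> Prop.
Hypothesis HX : forall v, nonzero_vec v ->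
  (X v <-> exists q l, forall k, v k = segre q l k).

Definition Xe (i j : nat) : {mpoly F[8]} := 'X_(e (inord i) (inord j)).
Definition minor (a b : nat) : {mpoly F[8]} := Xe a 0 * Xe b 1 - Xe a 1 * Xe b 0.
Definition polys : seq {mpoly F[8]} :=
  [seq 'X_k | k <- enum zp] ++ [:: minor 0 1; minor 0 2; minor 1 2].

Lemma minorE a b v : (minor a b).@[v] =
  v (e (inord a) (inord 0)) * v (e (inord b) (inord 1)) -
  v (e (inord a) (inord 1)) * v (e (inord b) (inord 0)).
Proof. by rewrite /minor /Xe mevalB !mevalM !mevalXU. Qed.

Lemma seg_of v : nonzero_vec v -> (forall k, zp k -> v k = 0) ->
  (forall a b, (a < b < 3)%N -> (minor a b).@[v] = 0) ->
  exists q l, forall k, v k = segre q l k.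
Proof.
move=> nzv Hz0 Hm.
have m1 := Hm 0%N 1%N erefl; have m2 := Hm 0%N 2%N erefl; have m3 := Hm 1%N 2%N erefl.
rewrite !minorE in m1 m2 m3; move/eqP: m1; move/eqP: m2; move/eqP: m3.
rewrite !subr_eq0 => /eqP m3 /eqP m2 /eqP m1.
have nzb : ~~ [&& (v (e (inord 0) (inord 0)) == 0), (v (e (inord 0) (inord 1)) == 0),
     (v (e (inord 1) (inord 0)) == 0), (v (e (inord 1) (inord 1)) == 0),
     (v (e (inord 2) (inord 0)) == 0) & (v (e (inord 2) (inord 1)) == 0)].
  case: nzv => k Hk.
  have nz : ~~ zp k by apply/negP => Zk; move: Hk; rewrite Hz0 // eqxx.
  rewrite -(He nz) in Hk.
  by case: (ord3P (ri k)) => [->|[->|->]] in Hk; case: (ord2P (rj k)) => [->|->] in Hk;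
    apply: contra Hk => /and5P[] /eqP a0 /eqP a1 /eqP b0 /eqP b1 /andP[/eqP c0 /eqP c1];
    rewrite ?a0 ?a1 ?b0 ?b1 ?c0 ?c1.
have [q0 [q1 [q2 [l0 [l1 [[E1 E2 E3 E4] [E5 E6]]]]]]] := rank1_6 m1 m2 m3 nzb.
exists (fun i : 'I_3 => nth 0 [:: q0; q1; q2] i), (fun j : 'I_2 => nth 0 [:: l0; l1] j).
have Hij : forall i j, v (e i j) = nth 0 [:: q0; q1; q2] i * nth 0 [:: l0; l1] j.
  by move=> i j; case: (ord3P i) => [->|[->|->]]; case: (ord2P j) => [->|->];
    rewrite ?inordK.
move=> k; rewrite /segre; case Zk: (zp k); first by rewrite Hz0.
by rewrite -Hij He ?Zk.
Qed.

Lemma closedX : proj_closed X.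
Proof.
exists polys; split.
  move=> p; rewrite mem_cat => /orP[/mapP[k _ ->]|].
    by exists 1%N; rewrite /homog_poly dhomogX; apply/eqP; apply: mdeg1.
  have H1 : forall a b, (Xe a b) \is 1.-homog.
    by move=> a b; rewrite /Xe dhomogX; apply/eqP; apply: mdeg1.
  rewrite !inE => /or3P[]/eqP->; exists 2%N; apply: rpredB;
    exact: (dhomogM (H1 _ _) (H1 _ _)).
move=> v nzv; split.
  case/(HX nzv) => q [l Hv] p; rewrite mem_cat => /orP[/mapP[k Hk ->]|].
    by rewrite mevalXU Hv /segre; rewrite mem_enum in Hk; rewrite ifT.
  by rewrite !inE => /or3P[]/eqP->; rewrite minorE !Hv !segreE; ring.
move=> H; apply/(HX nzv); apply: seg_of => //.
  move=> k Zk; rewrite -(mevalXU v k); apply: H.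
  by rewrite /polys mem_cat; apply/orP; left; apply/mapP; exists k; rewrite ?mem_enum.
move=> a b /andP[ab b3]; apply: H; rewrite /polys mem_cat; apply/orP; right.
by move: ab b3; case: a => [|[|[|a]]]; case: b => [|[|[|b]]] //= _ _; rewrite !inE eqxx ?orbT.
Qed.


Definition psi1 (v : 'I_8 -> F) : 'I_3 -> F := pickv (fun (t : 'I_2) (i : 'I_3) => v (e i t)).
Definition psi2 (v : 'I_8 -> F) : 'I_2 -> F := pickv (fun (t : 'I_3) (j : 'I_2) => v (e t j)).

Lemma psi1P v q l : (forall k, v k = segre q l k) -> (exists i j, v (e i j) != 0) ->
  exists2 nu, nu != 0 & forall i, psi1 v i = nu * q i.
Proof.
move=> Hv [i [j Hij]]; apply: (pickvP (w := l)).
  by move=> t i'; rewrite Hv segreE mulrC.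
by exists j, i.
Qed.

Lemma psi2P v q l : (forall k, v k = segre q l k) -> (exists i j, v (e i j) != 0) ->
  exists2 nu, nu != 0 & forall j, psi2 v j = nu * l j.
Proof.
move=> Hv [i [j Hij]]; apply: (pickvP (w := q)).
  by move=> t j'; rewrite Hv segreE.
by exists i, j.
Qed.

Definition gphi (k : 'I_8) : {mpoly F[5]} :=
  if zp k then 0 else 'X_(lshift 2 (ri k)) * 'X_(rshift 3 (rj k)).

Lemma gphiE x y k : (gphi k).@[concat32 x y] = segre x y k.
Proof.
rewrite /gphi /segre; case: (zp k); first by rewrite meval0.
by rewrite mevalM !mevalXU concat_l concat_r.
Qed.

Lemma bireg : biregular_to_P2P1 X.
Proof.
split; first exact: closedX.
exists segre, psi1, psi2; split.
- move=> x y [i0 Hi0] [j0 Hj0].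
  exists 1%N, 1%N, gphi; split; last split.
  + move=> k m; rewrite /gphi; case: (zp k).
      by rewrite -[0 : {mpoly F[5]}]/(0%:MP) msupp0.
    rewrite -mpolyXD msuppX inE => /eqP ->.
    rewrite !(eq_bigr _ (fun i _ => mnmDE i _ _)) !big_split /= !sumU /=.
    have := ltn_ord (ri k); have := ltn_ord (rj k).
    case: (ri k) => a Ha; case: (rj k) => b Hb /= _ _.
    by rewrite Ha /= leqNgt Ha.
  + exists (e i0 j0); by rewrite gphiE segreE mulf_neq0.
  + move=> x' y' _ _ _; exists 1; first exact: oner_neq0.
    by move=> k; rewrite gphiE mul1r.
- move=> x nzx Xx; have [q [l Hx]] := (HX nzx).1 Xx.
  have [i0 [j0 H0]] := nz_seg nzx Hx.
  exists 1%N, (fun i => 'X_(e i j0)); split; last split.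
  + by move=> k; rewrite /homog_poly dhomogX; apply/eqP; apply: mdeg1.
  + by exists i0; rewrite mevalXU.
  move=> y nzy Xy [i1 Hi1]; rewrite mevalXU in Hi1.
  have [q' [l' Hy]] := (HX nzy).1 Xy.
  have [nu nz_nu Hnu] := psi1P Hy (ex_intro _ i1 (ex_intro _ j0 Hi1)).
  have nzl : l' j0 != 0 by apply: contraNneq Hi1 => Hl; rewrite Hy segreE Hl mulr0.
  exists (l' j0 / nu); first by rewrite mulf_neq0 // invr_neq0.
  move=> i; rewrite mevalXU Hnu Hy segreE; by field.
- move=> x nzx Xx; have [q [l Hx]] := (HX nzx).1 Xx.
  have [i0 [j0 H0]] := nz_seg nzx Hx.
  exists 1%N, (fun j => 'X_(e i0 j)); split; last split.
  + by move=> k; rewrite /homog_poly dhomogX; apply/eqP; apply: mdeg1.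
  + by exists j0; rewrite mevalXU.
  move=> y nzy Xy [j1 Hj1]; rewrite mevalXU in Hj1.
  have [q' [l' Hy]] := (HX nzy).1 Xy.
  have [nu nz_nu Hnu] := psi2P Hy (ex_intro _ i0 (ex_intro _ j1 Hj1)).
  have nzq : q' i0 != 0 by apply: contraNneq Hj1 => Hl; rewrite Hy segreE Hl mul0r.
  exists (q' i0 / nu); first by rewrite mulf_neq0 // invr_neq0.
  move=> j; rewrite mevalXU Hnu Hy segreE; by field.
- move=> x y nzx nzy.
  have nzs := segre_nz nzx nzy.
  have Hs : forall k, segre x y k = segre x y k by [].
  have ne := nz_seg nzs Hs.
  split; first by apply/(HX nzs); exists x, y.
  have [nu nz_nu Hnu] := psi1P Hs ne.
  have [mu nz_mu Hmu] := psi2P Hs ne.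
  split.
    exists nu^-1; first by rewrite invr_neq0.
    by move=> i; rewrite Hnu mulKf.
  exists mu^-1; first by rewrite invr_neq0.
  by move=> i; rewrite Hmu mulKf.
- move=> v nzv Xv; have [q [l Hv]] := (HX nzv).1 Xv.
  have ne := nz_seg nzv Hv.
  have [nu nz_nu Hnu] := psi1P Hv ne.
  have [mu nz_mu Hmu] := psi2P Hv ne.
  exists (nu * mu)^-1; first by rewrite invr_neq0 // mulf_neq0.
  move=> k; rewrite Hv /segre; case: (zp k); first by rewrite mulr0.
  by rewrite Hnu Hmu; field; rewrite nz_mu nz_nu.
Qed.

End Segre.
End Gen.

Section Inst.
Variable F : fieldType.
Hypothesis Hsq : forall a : F, exists s, s * s = a.
Hypothesis H2 : (2 : F) != 0.

Lemma factor2 (q0 q1 q2 : F) : exists a1 c1 a2 c2 : F,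
  [/\ c1 * c2 = q0, a1 * c2 + c1 * a2 = q1 & a1 * a2 = q2].
Proof.
have [Z2|nz2] := eqVneq q2 0.
  exists q1, q0, 0, 1; split; by rewrite ?mulr1 ?mulr0 ?addr0.
have n4 : (4 : F) != 0.
  by rewrite (_ : 4 = 2 * 2 :> F) ?mulf_neq0 // -natrM.
have [s Hs] := Hsq (q1 ^+ 2 - 4 * q2 * q0).
exists q2, ((q1 - s) / 2), 1, ((q1 + s) / (2 * q2)); split.
- rewrite (_ : (q1 - s) / 2 * ((q1 + s) / (2 * q2)) = (q1 ^+ 2 - s * s) / (4 * q2)).
    by rewrite Hs; field; rewrite ?nz2 ?H2 ?n4.
  by field; rewrite ?nz2 ?H2 ?n4.
- by field; rewrite ?nz2 ?H2.
- by rewrite mulr1.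
Qed.

Lemma monE (k : 'I_8) : 'X_[zw_monom k] = (Z F) ^+ (k %/ 3) * (W F) ^+ (k %% 3).
Proof.
rewrite /Z /W !mpolyXn -mpolyXD; congr 'X_[_]; apply/mnmP => i.
rewrite mnmDE !mulmnE !mnm1E mnmE.
by case: i => [[|[|m]] Hm] //=; rewrite ?mul1n ?mul0n ?addn0 ?add0n ?muln1.
Qed.

Lemma zw_inj : injective zw_monom.
Proof.
move=> i k E.
have h0 := congr1 (fun m : 'X_{1..2} => m ord0) E.
have h1 := congr1 (fun m : 'X_{1..2} => m ord_max) E.
rewrite /= !mnmE /= in h0 h1.
by apply: val_inj; rewrite /= (divn_eq i 3) (divn_eq k 3) h0 h1.
Qed.

Lemma coef_sum (s : nat -> F) (k0 : 'I_8) :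
  coef_vec (\sum_(k < 8) s k *: ((Z F) ^+ (k %/ 3) * (W F) ^+ (k %% 3))) k0 = s k0.
Proof.
rewrite /coef_vec (eq_bigr (fun k : 'I_8 => s k *: 'X_[zw_monom k])); last by move=> k _; rewrite monE.
rewrite raddf_sum (bigD1 k0) //= mcoeffZ mcoeffX eqxx mulr1 big1 ?addr0 //.
move=> k nk; rewrite mcoeffZ mcoeffX.
by rewrite (_ : (zw_monom k == zw_monom k0) = false) ?mulr0 //; apply/negbTE;
  apply: contra nk => /eqP /zw_inj ->.
Qed.

Lemma coef0 (k : 'I_8) : coef_vec (0 : {mpoly F[2]}) k = 0.
Proof. by rewrite /coef_vec mcoeff0. Qed.


Lemma segre_ext zp ri rj (q q' : 'I_3 -> F) (l l' : 'I_2 -> F) :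
  q =1 q' -> l =1 l' -> forall k, @segre F zp ri rj q l k = @segre F zp ri rj q' l' k.
Proof. by move=> Hq Hl k; rewrite /segre Hq Hl. Qed.

Definition e1 (i : 'I_3) (j : 'I_2) : 'I_8 := inord (3 * i + j).
Definition zp1 : pred 'I_8 := fun k => (k %% 3 == 2)%N.
Definition ri1 (k : 'I_8) : 'I_3 := inord (k %/ 3).
Definition rj1 (k : 'I_8) : 'I_2 := inord (k %% 3).

Lemma Hz1 i j : zp1 (e1 i j) = false.
Proof.
have Hi := ltn_ord i; have Hj := ltn_ord j.
rewrite /zp1 /e1 inordK; last lia.
apply/negbTE/eqP; lia.
Qed.
Lemma Hri1 i j : ri1 (e1 i j) = i.
Proof.
have Hi := ltn_ord i; have Hj := ltn_ord j.
apply: val_inj; rewrite /ri1 /e1 /= !inordK; try lia.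
Qed.
Lemma Hrj1 i j : rj1 (e1 i j) = j.
Proof.
have Hi := ltn_ord i; have Hj := ltn_ord j.
apply: val_inj; rewrite /rj1 /e1 /= !inordK; try lia.
Qed.
Lemma He1 k : ~~ zp1 k -> e1 (ri1 k) (rj1 k) = k.
Proof.
have Hk := ltn_ord k; rewrite /zp1 => /eqP Hz.
apply: val_inj; rewrite /ri1 /rj1 /e1 /= !inordK; try lia.
Qed.

Lemma coefp1 (a1 c1 a2 c2 b3 c3 : F) (k : 'I_8) :
  coef_vec ((a1 *: Z F + c1%:MP) * (a2 *: Z F + c2%:MP) * (b3 *: W F + c3%:MP)) k =
  segre zp1 ri1 rj1 (fun i : 'I_3 => nth 0 [:: c1 * c2; a1 * c2 + c1 * a2; a1 * a2] i)
                    (fun j : 'I_2 => nth 0 [:: c3; b3] j) k.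
Proof.
have -> : (a1 *: Z F + c1%:MP) * (a2 *: Z F + c2%:MP) * (b3 *: W F + c3%:MP) =
  \sum_(k < 8) nth 0 [:: c1*c2*c3; c1*c2*b3; 0; (a1*c2+c1*a2)*c3; (a1*c2+c1*a2)*b3; 0; a1*a2*c3; a1*a2*b3] k
     *: ((Z F) ^+ (k %/ 3) * (W F) ^+ (k %% 3)).
  rewrite -(big_mkord xpredT (fun k => nth 0 _ k *: ((Z F) ^+ (k %/ 3) * (W F) ^+ (k %% 3)))).
  by rewrite unlock /= -!mul_mpolyC; ring.
rewrite coef_sum.
case: k => [[|[|[|[|[|[|[|[|m]]]]]]]] Hk] //; rewrite /segre /zp1 /ri1 /rj1 /= ?inordK //.
Qed.


Lemma HX1 (v : 'I_8 -> F) : nonzero_vec v ->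
  (D_11_0_1 v <-> exists q l, forall k, v k = segre zp1 ri1 rj1 q l k).
Proof.
move=> nzv; split.
  case=> [a1 [c1 [a2 [c2 [b3 [c3 [_ [lam _ Hl]]]]]]]].
  exists (fun i : 'I_3 => lam * nth 0 [:: c1 * c2; a1 * c2 + c1 * a2; a1 * a2] i),
         (fun j : 'I_2 => nth 0 [:: c3; b3] j).
  move=> k; rewrite Hl coefp1 /segre; case: (zp1 k); by rewrite ?mulr0 ?mulrA.
case=> q [l Hv].
have [a1 [c1 [a2 [c2 [E0 E1 E2]]]]] := factor2 (q (inord 0)) (q (inord 1)) (q (inord 2)).
have Hc : forall k, coef_vec ((a1 *: Z F + c1%:MP) * (a2 *: Z F + c2%:MP)
             * (l (inord 1) *: W F + (l (inord 0))%:MP)) k = v k.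
  move=> k; rewrite coefp1 Hv; apply: segre_ext.
    by move=> i; case: (ord3P i) => [->|[->|->]]; rewrite inordK.
  by move=> j; case: (ord2P j) => [->|->]; rewrite inordK.
exists a1, c1, a2, c2, (l (inord 1)), (l (inord 0)); split.
  apply/negP => /eqP p0; case: nzv => k; by rewrite -Hc p0 coef0 eqxx.
by exists 1; [exact: oner_neq0 | move=> k; rewrite Hc mul1r].
Qed.

Definition e2 (i : 'I_3) (j : 'I_2) : 'I_8 := inord (3 * j + i).
Definition zp2 : pred 'I_8 := fun k => (k %/ 3 == 2)%N.
Definition ri2 (k : 'I_8) : 'I_3 := inord (k %% 3).
Definition rj2 (k : 'I_8) : 'I_2 := inord (k %/ 3).

Lemma Hz2 i j : zp2 (e2 i j) = false.
Proof.
have Hi := ltn_ord i; have Hj := ltn_ord j.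
rewrite /zp2 /e2 inordK; last lia.
apply/negbTE/eqP; lia.
Qed.
Lemma Hri2 i j : ri2 (e2 i j) = i.
Proof.
have Hi := ltn_ord i; have Hj := ltn_ord j.
apply: val_inj; rewrite /ri2 /e2 /= !inordK; try lia.
Qed.
Lemma Hrj2 i j : rj2 (e2 i j) = j.
Proof.
have Hi := ltn_ord i; have Hj := ltn_ord j.
apply: val_inj; rewrite /rj2 /e2 /= !inordK; try lia.
Qed.
Lemma He2 k : ~~ zp2 k -> e2 (ri2 k) (rj2 k) = k.
Proof.
have Hk := ltn_ord k; rewrite /zp2 => /eqP Hz.
apply: val_inj; rewrite /ri2 /rj2 /e2 /= !inordK; try lia.
Qed.

Lemma coefp2 (a1 c1 b2 c2 b3 c3 : F) (k : 'I_8) :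
  coef_vec ((a1 *: Z F + c1%:MP) * (b2 *: W F + c2%:MP) * (b3 *: W F + c3%:MP)) k =
  segre zp2 ri2 rj2 (fun i : 'I_3 => nth 0 [:: c2 * c3; b2 * c3 + c2 * b3; b2 * b3] i)
                    (fun j : 'I_2 => nth 0 [:: c1; a1] j) k.
Proof.
have -> : (a1 *: Z F + c1%:MP) * (b2 *: W F + c2%:MP) * (b3 *: W F + c3%:MP) =
  \sum_(k < 8) nth 0 [:: c2*c3*c1; (b2*c3+c2*b3)*c1; b2*b3*c1; c2*c3*a1; (b2*c3+c2*b3)*a1; b2*b3*a1; 0; 0] k
     *: ((Z F) ^+ (k %/ 3) * (W F) ^+ (k %% 3)).
  rewrite -(big_mkord xpredT (fun k => nth 0 _ k *: ((Z F) ^+ (k %/ 3) * (W F) ^+ (k %% 3)))).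
  by rewrite unlock /= -!mul_mpolyC; ring.
rewrite coef_sum.
case: k => [[|[|[|[|[|[|[|[|m]]]]]]]] Hk] //; rewrite /segre /zp2 /ri2 /rj2 /= ?inordK //.
Qed.

Lemma HX2 (v : 'I_8 -> F) : nonzero_vec v ->
  (D_1_0_11 v <-> exists q l, forall k, v k = segre zp2 ri2 rj2 q l k).
Proof.
move=> nzv; split.
  case=> [a1 [c1 [b2 [c2 [b3 [c3 [_ [lam _ Hl]]]]]]]].
  exists (fun i : 'I_3 => lam * nth 0 [:: c2 * c3; b2 * c3 + c2 * b3; b2 * b3] i),
         (fun j : 'I_2 => nth 0 [:: c1; a1] j).
  move=> k; rewrite Hl coefp2 /segre; case: (zp2 k); by rewrite ?mulr0 ?mulrA.
case=> q [l Hv].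
have [a1 [c1 [a2 [c2 [E0 E1 E2]]]]] := factor2 (q (inord 0)) (q (inord 1)) (q (inord 2)).
have Hc : forall k, coef_vec ((l (inord 1) *: Z F + (l (inord 0))%:MP) * (a1 *: W F + c1%:MP)
             * (a2 *: W F + c2%:MP)) k = v k.
  move=> k; rewrite coefp2 Hv; apply: segre_ext.
    by move=> i; case: (ord3P i) => [->|[->|->]]; rewrite inordK.
  by move=> j; case: (ord2P j) => [->|->]; rewrite inordK.
exists (l (inord 1)), (l (inord 0)), a1, c1, a2, c2; split.
  apply/negP => /eqP p0; case: nzv => k; by rewrite -Hc p0 coef0 eqxx.
by exists 1; [exact: oner_neq0 | move=> k; rewrite Hc mul1r].
Qed.

Lemma main_gen : @biregular_to_P2P1 F 7 (@D_11_0_1 F) /\ @biregular_to_P2P1 F 7 (@D_1_0_11 F).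
Proof.
split.
  exact: (bireg Hz1 Hri1 Hrj1 He1 HX1).
exact: (bireg Hz2 Hri2 Hrj2 He2 HX2).
Qed.

End Inst.

Theorem proposition5p3 (R : realType) :
  @biregular_to_P2P1 (complex R) 7 (@D_11_0_1 (complex R)) /\
  @biregular_to_P2P1 (complex R) 7 (@D_1_0_11 (complex R)).
Proof.
apply: main_gen.
  by move=> a; exists (sqrtC a); rewrite -expr2 sqrtCK.
by rewrite pnatr_eq0.
Qed.
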